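(* Consider the setting in the context, and let $p$ and $V(x_0,s_0,\lambda)$ be the asking reservation price and value function of $\lambda$ units of the non-traded stock. Let $\bar w=W\left(s_0e^{(\delta-\frac{\eta^2}{2})T}\eta^2T\lambda\gamma(1-\rho^2)\right)$. Then $p=D+A$, where $$D=\frac{e^{-rT}}{\gamma(1-\rho^2)}\left(\frac{\bar w}{\eta^2T}+\frac{\bar w^2}{2\eta^2T}\right),\qquad A=-\frac{e^{-rT}}{\gamma(1-\rho^2)}\ln\mathbb E\left(\exp\left(-\frac{\bar w}{\eta^2T}\left(e^{\eta\sqrt TN}-1-\eta\sqrt TN\right)\right)\right).$$ Moreover $V(x_0,s_0,\lambda)=V_D(x_0,s_0,\lambda)V_A(s_0,\lambda)$, where $$V_D(x_0,s_0,\lambda)=-\frac1\gamma\exp\left(-\gamma e^{rT}(x_0+D)-\frac{(\mu-r)^2}{2\sigma^2}T\right),\qquad V_A(s_0,\lambda)=\exp\left(-\gamma e^{rT}A\right).$$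
   Context: Fix $T>0$, $r\in\mathbb R$, $\nu,\mu\in\mathbb R$, $\eta>0$, $\sigma>0$, $\rho\in(-1,1)$, $s_0>0$, $\lambda>0$, $\gamma>0$, $x_0\in\mathbb R$; $N$ is a standard Gaussian random variable; $\delta=\nu-\eta\rho\frac{\mu-r}{\sigma}$. (Model: non-traded asset $dS_t=S_t(\nu dt+\eta dZ_t)$, traded asset $dP_t=P_t(\mu dt+\sigma dB_t)$, correlation $\rho$, bond rate $r$, exponential utility $-\frac1\gamma e^{-\gamma x}$.) The reservation price and value function are $$p=-\frac{e^{-rT}}{\gamma(1-\rho^2)}\ln\mathbb E\exp\left(-\lambda\gamma(1-\rho^2)s_0e^{(\delta-\frac{\eta^2}{2})T}e^{\eta\sqrt TN}\right),$$ $$V(x_0,s_0,\lambda)=-\frac1\gamma e^{-\gamma x_0e^{rT}-\frac{(\mu-r)^2}{2\sigma^2}T}\left(\mathbb E\exp\left(-\lambda\gamma(1-\rho^2)s_0e^{(\delta-\frac{\eta^2}{2})T}e^{\eta\sqrt TN}\right)\right)^{\frac1{1-\rho^2}}.$$ $W$ is the Lambert function, the inverse of $x\in(-1,\infty)\mapsto xe^x\in(-1/e,\infty)$. *)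

(* Defs.v *)
From HB Require Import structures.
From mathcomp Require Import all_boot all_order all_algebra.
From mathcomp Require Import all_classical all_reals all_analysis.
Set Implicit Arguments. Unset Strict Implicit. Unset Printing Implicit Defensive.
Import Order.TTheory GRing.Theory Num.Theory.
Local Open Scope classical_set_scope.
Local Open Scope ring_scope.

Definition gaussE {R : realType} (g : R -> R) : R :=
  fine (\int[normal_prob (0:R) 1]_x (g x)%:E)%E.

Definition lambertW {R : realType} (y : R) : R :=
  xget 0 [set x : R | -1 < x /\ x * expR x = y].

Definition delta_par {R : realType} (nu eta rho mu r sigma : R) : R :=
  nu - eta * rho * ((mu - r) / sigma).

Definition Ekey {R : realType} (T delta eta rho s0 lambda gamma : R) : R :=
  gaussE (fun n => expR (- (lambda * gamma * (1 - rho ^+ 2) * s0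
          * expR ((delta - eta ^+ 2 / 2) * T) * expR (eta * Num.sqrt T * n)))).

Definition reservation_price {R : realType}
  (T r nu mu eta sigma rho s0 lambda gamma : R) : R :=
  - (expR (- r * T) / (gamma * (1 - rho ^+ 2)))
    * ln (Ekey T (delta_par nu eta rho mu r sigma) eta rho s0 lambda gamma).

Definition value_function {R : realType}
  (T r nu mu eta sigma rho gamma : R) (x0 s0 lambda : R) : R :=
  - gamma^-1 * expR (- gamma * x0 * expR (r * T)
                     - (mu - r) ^+ 2 / (2 * sigma ^+ 2) * T)
  * powR (Ekey T (delta_par nu eta rho mu r sigma) eta rho s0 lambda gamma)
         (1 - rho ^+ 2)^-1.

(* Main.v *)
Require Import Defs.
From HB Require Import structures.
From mathcomp Require Import all_boot all_order all_algebra.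
From mathcomp Require Import all_classical all_reals all_analysis.
From mathcomp Require Import measurable_realfun.
From mathcomp Require Import ring lra.
Import Order.TTheory GRing.Theory Num.Theory.
Import numFieldNormedType.Exports.
Local Open Scope ring_scope.
Local Open Scope classical_set_scope.

Section S.
Context {R : realType}.
Local Notation mu := (@lebesgue_measure R).



Lemma integral_normal01 (f : R -> R) : measurable_fun setT f ->
  (forall x, 0 <= f x <= 1) ->
  (\int[normal_prob 0 1]_x (f x)%:E =
   \int[mu]_x ((f x * normal_pdf 0 1 x)%:E))%E.
Proof.
move=> mf f01.
have mfE : measurable_fun setT (EFin \o f) by exact/measurable_EFinP.
have finf : (\int[normal_prob 0 1]_x `|(f x)%:E| < +oo)%E.
  under eq_integral => x _.
    rewrite gee0_abs; last by rewrite lee_fin; case/andP: (f01 x).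
    over.
  apply: (@le_lt_trans _ _ (\int[normal_prob 0 1]_x (cst 1%E x))%E); last first.
    by rewrite integral_cst//= mul1e probability_setT ltry.
  apply: ge0_le_integral => //=.
  - by move=> x _; rewrite lee_fin; case/andP: (f01 x).
  - by move=> x _; rewrite lee_fin; case/andP: (f01 x).
under [RHS]eq_integral do rewrite EFinM.
rewrite -(Radon_Nikodym_change_of_variables (normal_prob_dominates 0 1))//=; last first.
  by apply/integrableP; split.
apply: ae_eq_integral => //.
- apply: emeasurable_funM => //; apply: (measurable_int mu).
  apply: (integrableS _ _ (@subsetT _ _)) => //=.
  by apply: Radon_Nikodym_integrable; exact: normal_prob_dominates.
- apply: emeasurable_funM => //=; apply/measurableT_comp => //=.
  exact: measurable_normal_pdf.
- apply: ae_eqe_mul2l => /=.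
  rewrite Radon_NikodymE//=; first exact: normal_prob_dominates.
  move=> abmu.
  case: cid => /= h [h1 h2 h3].
  apply: integral_ae_eq => //=.
  + by apply/measurableT_comp =>//; exact: measurable_normal_pdf.
  + by move=> E _ mE; rewrite -h3.
Qed.



Lemma shift_integral (G : R -> R) (b : R) : continuous G -> (forall x, 0 <= G x) ->
  (\int[mu]_x (G x)%:E = \int[mu]_x (G (x + b))%:E)%E.
Proof.
move=> cG G0.
pose F := fun x : R => x + b.
have F'E : F^`()%classic = cst 1.
  apply/funext => x; rewrite /F derive1E deriveD// derive_cst derive_id.
  by rewrite addr0.
rewrite (@increasing_ge0_integration_by_substitutionT _ F G)//.
- apply: eq_integral => x _; rewrite F'E /= mulr1 //.
- by move=> x y xy; rewrite /F ltrD2r.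
- by rewrite F'E => ?; exact: cvg_cst.
- by rewrite F'E; exact: is_cvg_cst.
- by rewrite F'E; exact: is_cvg_cst.
- exact: cvg_addrr_Ny.
- exact: cvg_addrr.
Qed.


Lemma lambertW_spec (y : R) : 0 < y ->
  0 < lambertW y /\ lambertW y * expR (lambertW y) = y.
Proof.
move=> y0.
have ex : exists x : R, -1 < x /\ x * expR x = y.
  have cf : continuous (fun x : R => x * expR x).
    by move=> x; apply: continuousM; [exact: cvg_id | exact: continuous_expR].
  have [|x] := @IVT R (fun x => x * expR x) 0 y y (ltW y0) (continuous_subspaceT cf).
    rewrite mul0r.
    have hy : y <= y * expR y.
      by rewrite ler_peMr ?(ltW y0)// ltW// expR_gt1.
    have hy0 : 0 <= y * expR y by rewrite mulr_ge0 ?expR_ge0 ?(ltW y0).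
    by rewrite ge_min le_max (ltW y0) hy orbT.
  rewrite in_itv /= => /andP[x0 _] hx; exists x; split => //.
  by apply: (lt_le_trans _ x0); rewrite ltrN10.
have [h1 h2] := xgetPex 0 ex.
rewrite /lambertW; split => //.
have e0 := expR_gt0 (xget 0 [set x : R | -1 < x /\ x * expR x = y]).
move: h2 e0; set W := xget _ _ => h2 e0.
rewrite ltNge; apply/negP => W0.
have : W * expR W <= 0 by apply: mulr_le0_ge0 => //; exact: ltW.
by rewrite h2 leNgt y0.
Qed.

Lemma gaussE_int (h : R -> R) : measurable_fun setT h ->
  (forall x, 0 <= h x <= 1) ->
  (\int[normal_prob 0 1]_x (h x)%:E)%E = (gaussE h)%:E /\ 0 <= gaussE h <= 1.
Proof.
move=> mh h01.
have I0 : (0 <= \int[normal_prob 0 1]_x (h x)%:E)%E.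
  by apply: integral_ge0 => x _; rewrite lee_fin; case/andP: (h01 x).
have I1 : (\int[normal_prob 0 1]_x (h x)%:E <= 1)%E.
  apply: (@le_trans _ _ (\int[normal_prob 0 1]_x (cst 1%E x))%E).
    apply: ge0_le_integral => //=.
    - by move=> x _; rewrite lee_fin; case/andP: (h01 x).
    - exact/measurable_EFinP.
    - by move=> x _; rewrite lee_fin; case/andP: (h01 x).
  by rewrite integral_cst//= mul1e probability_setT.
have fin : (\int[normal_prob 0 1]_x (h x)%:E)%E \is a fin_num.
  by rewrite ge0_fin_numE// (le_lt_trans I1)// ltry.
rewrite /gaussE fineK//; split => //.
apply/andP; split; rewrite -lee_fin fineK//.
Qed.

Lemma gaussE_shift (g h : R -> R) (b C : R) :
  continuous g -> continuous h ->
  (forall x, 0 <= g x <= 1) -> (forall x, 0 <= h x <= 1) -> 0 <= C ->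
  (forall x, g (x + b) * normal_pdf 0 1 (x + b) = C * (h x * normal_pdf 0 1 x)) ->
  gaussE g = C * gaussE h.
Proof.
move=> cg ch g01 h01 C0 Hid.
have mg := continuous_measurable_fun cg.
have mh := continuous_measurable_fun ch.
have [Ig _] := gaussE_int _ mg g01.
have [Ih _] := gaussE_int _ mh h01.
have cpdf : continuous (normal_pdf (0:R) 1) := @continuous_normal_pdf R 0 1 (oner_neq0 _).
have mpdf : measurable_fun setT (normal_pdf (0:R) 1) := continuous_measurable_fun cpdf.
apply: EFin_inj; rewrite EFinM -Ig -Ih !integral_normal01 //.
rewrite (@shift_integral (fun x => g x * normal_pdf 0 1 x) b); last 2 first.
- by move=> x; apply: continuousM; [exact: cg | exact: cpdf].
- by move=> x; rewrite mulr_ge0 ?normal_pdf_ge0//; case/andP: (g01 x).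
under eq_integral do rewrite Hid EFinM.
rewrite ge0_integralZl_EFin //.
- by move=> x _; rewrite lee_fin mulr_ge0 ?normal_pdf_ge0//; case/andP: (h01 x).
- by apply/measurable_EFinP; apply: measurable_funM.
Qed.

Lemma gaussE_gt0 (h : R -> R) : continuous h -> (forall x, 0 < h x <= 1) ->
  0 < gaussE h.
Proof.
move=> ch h01.
have h01' : forall x, 0 <= h x <= 1.
  by move=> x; case/andP: (h01 x) => /ltW -> ->.
have mh := continuous_measurable_fun ch.
have [Ih /andP[H0 _]] := gaussE_int _ mh h01'.
rewrite lt_neqAle H0 andbT; apply/eqP => E0.
move: Ih; rewrite -E0 => I0.
have : (\int[normal_prob 0 1]_x `|(h x)%:E| = 0)%E.
  apply: (etrans _ I0); apply: eq_integral => x _.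
  by rewrite gee0_abs// lee_fin; case/andP: (h01' x).
have mhE : measurable_fun setT (EFin \o h) by exact/measurable_EFinP.
move=> H; have := (ae_eq_integral_abs (normal_prob 0 1) measurableT mhE).1 H.
case=> N [mN PN0 sub].
have : [set: R] `<=` N.
  move=> x _; apply: sub => /= Hxx; move: (Hxx I) => /eqP.
  by rewrite eqe; case/andP: (h01 x) => /gt_eqF ->.
move=> TN; have NT : N = setT by apply/seteqP; split.
have P1 := @probability_setT _ _ _ (normal_prob (0:R) 1).
move: PN0; rewrite NT => PT.
have := etrans (esym P1) PT => /eqP.
by rewrite eqe oner_eq0.
Qed.

Lemma cont_lin (a : R) : continuous (fun x : R => a * x).
Proof. by move=> x; apply: continuousM; [exact: cvg_cst | exact: cvg_id]. Qed.

Lemma cont_expR_lin (a : R) : continuous (fun x : R => expR (a * x)).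
Proof.
move=> x; apply: (@continuous_comp _ _ _ (fun x => a * x) expR).
  exact: cont_lin.
exact: continuous_expR.
Qed.

Lemma cont_gK (c a : R) : continuous (fun x : R => expR (- (c * expR (a * x)))).
Proof.
move=> x; apply: (@continuous_comp _ _ _ (fun x => - (c * expR (a * x))) expR).
  apply: continuousN; apply: continuousM; [exact: cvg_cst | exact: cont_expR_lin].
exact: continuous_expR.
Qed.

Lemma cont_gA (k a : R) :
  continuous (fun x : R => expR (- k * (expR (a * x) - 1 - a * x))).
Proof.
move=> x; apply: (@continuous_comp _ _ _ (fun x => - k * (expR (a * x) - 1 - a * x)) expR).
  apply: continuousM; first exact: cvg_cst.
  apply: continuousB; last exact: cont_lin.
  apply: continuousB; last exact: cvg_cst.
  exact: cont_expR_lin.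
exact: continuous_expR.
Qed.
End S.

Local Close Scope classical_set_scope.

Theorem theorem3 (R : realType) (T r nu mu eta sigma rho s0 lambda gamma x0 : R)
  (hT : 0 < T) (heta : 0 < eta) (hsigma : 0 < sigma)
  (hrho1 : -1 < rho) (hrho2 : rho < 1)
  (hs0 : 0 < s0) (hlambda : 0 < lambda) (hgamma : 0 < gamma) :
  let delta := delta_par nu eta rho mu r sigma in
  let wbar := lambertW (s0 * expR ((delta - eta ^+ 2 / 2) * T) * eta ^+ 2 * T
                        * lambda * gamma * (1 - rho ^+ 2)) in
  let D := expR (- r * T) / (gamma * (1 - rho ^+ 2))
           * (wbar / (eta ^+ 2 * T) + wbar ^+ 2 / (2 * eta ^+ 2 * T)) in
  let A := - (expR (- r * T) / (gamma * (1 - rho ^+ 2)))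
           * ln (gaussE (fun n => expR (- (wbar / (eta ^+ 2 * T))
                   * (expR (eta * Num.sqrt T * n) - 1 - eta * Num.sqrt T * n)))) in
  let VD := - gamma^-1 * expR (- gamma * expR (r * T) * (x0 + D)
                               - (mu - r) ^+ 2 / (2 * sigma ^+ 2) * T) in
  let VA := expR (- gamma * expR (r * T) * A) in
  reservation_price T r nu mu eta sigma rho s0 lambda gamma = D + A /\
  value_function T r nu mu eta sigma rho gamma x0 s0 lambda = VD * VA.
Proof.
move=> delta wbar D A VD VA.
have rho2 : 0 < 1 - rho ^+ 2 by nra.
have sT : Num.sqrt T ^+ 2 = T by rewrite sqr_sqrtr // ltW.
have sT0 : 0 < Num.sqrt T by rewrite sqrtr_gt0.
have a0 : 0 < eta * Num.sqrt T by rewrite mulr_gt0.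
have a2 : eta ^+ 2 * T = (eta * Num.sqrt T) ^+ 2 by rewrite exprMn sT.
pose c := lambda * gamma * (1 - rho ^+ 2) * s0 * expR ((delta - eta ^+ 2 / 2) * T).
have c0 : 0 < c by rewrite /c !mulr_gt0 // expR_gt0.
have [w0 hw] : 0 < wbar /\ wbar * expR wbar = c * (eta * Num.sqrt T) ^+ 2.
  have harg : s0 * expR ((delta - eta ^+ 2 / 2) * T) * eta ^+ 2 * T * lambda * gamma
      * (1 - rho ^+ 2) = c * (eta * Num.sqrt T) ^+ 2 by rewrite -a2 /c; ring.
  by rewrite /wbar harg; apply: lambertW_spec; rewrite mulr_gt0 // exprn_gt0.
pose gK := fun n : R => expR (- (c * expR (eta * Num.sqrt T * n))).
pose k := wbar / (eta ^+ 2 * T).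
pose gA := fun n : R => expR (- k * (expR (eta * Num.sqrt T * n) - 1 - eta * Num.sqrt T * n)).
have EK : Ekey T delta eta rho s0 lambda gamma = gaussE gK by [].
have k0 : 0 < k by rewrite /k divr_gt0 // mulr_gt0 // exprn_gt0.
have gK01 : forall x, 0 < gK x <= 1.
  by move=> y; rewrite /gK expR_gt0 /= expR_le1 oppr_le0 ltW // mulr_gt0 // expR_gt0.
have gA01 : forall x, 0 <= gA x <= 1.
  move=> y; rewrite /gA expR_ge0 /= expR_le1 mulNr oppr_le0 mulr_ge0 // ?(ltW k0) //.
  have := expR_ge1Dx (eta * Num.sqrt T * y); lra.
have key : gaussE gA = expR (wbar / (eta ^+ 2 * T) + wbar ^+ 2 / (2 * eta ^+ 2 * T)) * gaussE gK.
  apply: (@gaussE_shift _ gA gK (wbar / (eta * Num.sqrt T))).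
  - exact: cont_gA.
  - exact: cont_gK.
  - exact: gA01.
  - by move=> y; case/andP: (gK01 y) => /ltW -> ->.
  - exact: expR_ge0.
  move=> y; rewrite normal_pdfE ?oner_neq0 //= /gA /gK /normal_fun.
  have an0 : eta * Num.sqrt T != 0 by rewrite gt_eqF.
  have aw : eta * Num.sqrt T * (wbar / (eta * Num.sqrt T)) = wbar.
    by rewrite mulrC divfK.
  have hc : c = wbar * expR wbar / (eta * Num.sqrt T) ^+ 2.
    by rewrite hw mulfK // expf_neq0.
  rewrite (mulrDr (eta * Num.sqrt T) y) aw.
  rewrite [LHS]mulrCA -expRD [RHS]mulrA -expRD [RHS]mulrCA -expRD.
  congr (_ * expR _).
  rewrite expRD /k a2 hc !subr0 expr1n.
  move: sT an0; generalize (Num.sqrt T) => sq sT an0; rewrite -sT.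
  field.
  by move: an0; rewrite mulf_eq0 negb_or andbC.
have EK0 : 0 < gaussE gK.
  apply: gaussE_gt0 => //; exact: cont_gK.
have hp : reservation_price T r nu mu eta sigma rho s0 lambda gamma = D + A.
  rewrite /reservation_price -/delta EK /D /A -/k -/gA key.
  rewrite lnM ?posrE ?expR_gt0 // expRK.
  rewrite /k; ring.
split => //.
rewrite /value_function -/delta EK /VD /VA.
have -> : A = reservation_price T r nu mu eta sigma rho s0 lambda gamma - D.
  by rewrite hp; ring.
rewrite /reservation_price -/delta EK /powR gt_eqF //.
rewrite -!mulrA -!expRD.
congr (_ * expR _).
rewrite (mulNr r T) expRN.
have e0 : expR (r * T) != 0 by rewrite gt_eqF // expR_gt0.
have g0 : gamma != 0 by rewrite gt_eqF.
have r0 : 1 - rho ^+ 2 != 0 by rewrite gt_eqF.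
field.
by rewrite r0 g0 e0 gt_eqF.
Qed.
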